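(* Let $(X,P,o)$ be a generalized parametric metric space such that $P$ satisfies (P5) and $o$ is continuous. Then $(X,\tau_P)$ is normal: for any two disjoint closed sets $A,B\subseteq X$ there exist disjoint $U,V\in\tau_P$ with $A\subseteq U$ and $B\subseteq V$.
   Context: A binary operation $o:[0,\infty)\times[0,\infty)\to[0,\infty)$ (written $\alpha\, o\, \beta$) is assumed to satisfy, for all $\alpha,\beta,\gamma\in[0,\infty)$: (a) $\alpha\, o\, 0=\alpha$; (b) $\alpha\le\beta\implies \alpha\, o\,\gamma\le\beta\, o\,\gamma$; (c) $\alpha\, o\,\gamma=\gamma\, o\,\alpha$; (d) $\alpha\, o\,(\beta\, o\,\gamma)=(\alpha\, o\,\beta)\, o\,\gamma$. It is continuous if whenever $\alpha_n\to\alpha$ and $\beta_n\to\beta$ in $[0,\infty)$ we have $\alpha_n\, o\,\beta_n\to\alpha\, o\,\beta$. A generalized parametric metric on a nonempty set $X$ is a function $P:X\times X\times(0,\infty)\to[0,\infty)$ such that: (P1) $P(a,b,t)=0$ for all $t>0$ if and only if $a=b$; (P2) $P(a,b,t)=P(b,a,t)$ for all $a,b\in X$, $t>0$; (P3) $P(a,b,s+t)\le P(a,x,s)\, o\, P(b,x,t)$ for all $s,t>0$ and $a,b,x\in X$. The triple $(X,P,o)$ is a generalized parametric metric space. Condition (P5): for all $a,b\in X$, the map $t\mapsto P(a,b,t)$ is continuous on $(0,\infty)$. Open ball: $B(a,\alpha,t)=\{b\in X: P(a,b,t)<\alpha\}$. $\tau_P$ is the topology consisting of all $A\subseteq X$ such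 that for every $a\in A$ there exist $\alpha>0,t>0$ with $B(a,\alpha,t)\subseteq A$. A sequence $\{x_n\}$ converges to $x$ if $\lim_{n\to\infty}P(x_n,x,t)=0$ for all $t>0$. A set $A\subseteq X$ is closed if whenever a sequence in $A$ converges to some $x\in X$, then $x\in A$. *)

(* Defs.v *)
From Stdlib Require Import Reals.
Open Scope R_scope.

(* Binary operation o on [0,oo), axioms (a)-(d); values outside [0,oo) are junk. *)
Definition is_gp_op (o : R -> R -> R) : Prop :=
  (forall a b, 0 <= a -> 0 <= b -> 0 <= o a b) /\
  (forall a, 0 <= a -> o a 0 = a) /\
  (forall a b c, 0 <= a -> 0 <= b -> 0 <= c -> a <= b -> o a c <= o b c) /\
  (forall a c, 0 <= a -> 0 <= c -> o a c = o c a) /\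
  (forall a b c, 0 <= a -> 0 <= b -> 0 <= c -> o a (o b c) = o (o a b) c).

Definition op_continuous (o : R -> R -> R) : Prop :=
  forall (an bn : nat -> R) (a b : R),
    (forall n, 0 <= an n) -> (forall n, 0 <= bn n) -> 0 <= a -> 0 <= b ->
    Un_cv an a -> Un_cv bn b -> Un_cv (fun n => o (an n) (bn n)) (o a b).

(* Generalized parametric metric: P : X -> X -> (0,oo) -> [0,oo);
   values at t <= 0 are junk and never used. *)
Definition is_gp_metric {X : Type} (o : R -> R -> R) (P : X -> X -> R -> R) : Prop :=
  (forall a b t, 0 < t -> 0 <= P a b t) /\
  (forall a b, (forall t, 0 < t -> P a b t = 0) <-> a = b) /\
  (forall a b t, 0 < t -> P a b t = P b a t) /\
  (forall a b x s t, 0 < s -> 0 < t -> P a b (s + t) <= o (P a x s) (P b x t)).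

Definition P5 {X : Type} (P : X -> X -> R -> R) : Prop :=
  forall a b t, 0 < t -> continuity_pt (fun s => P a b s) t.

Definition open_ball {X : Type} (P : X -> X -> R -> R) (a : X) (al t : R) : X -> Prop :=
  fun b => P a b t < al.

Definition tauP_open {X : Type} (P : X -> X -> R -> R) (A : X -> Prop) : Prop :=
  forall a, A a -> exists al t, 0 < al /\ 0 < t /\
    (forall b, open_ball P a al t b -> A b).

Definition gp_converges {X : Type} (P : X -> X -> R -> R) (xn : nat -> X) (x : X) : Prop :=
  forall t, 0 < t -> Un_cv (fun n => P (xn n) x t) 0.

(* closed sets, sequential definition as in the paper *)
Definition gp_closed {X : Type} (P : X -> X -> R -> R) (A : X -> Prop) : Prop :=
  forall (xn : nat -> X) (x : X), (forall n, A (xn n)) -> gp_converges P xn x -> A x.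

(* Main.v *)
Require Import Defs.
From Stdlib Require Import Reals Lra Lia Classical ClassicalEpsilon.
Open Scope R_scope.

Lemma inv_small (eps : R) : 0 < eps -> exists N : nat, forall n, (N <= n)%nat -> / (INR n + 1) < eps.
Proof.
  intros He. destruct (archimed_cor1 eps He) as [N [HN HN0]].
  exists N. intros n Hn.
  assert (HNr : 0 < INR N) by (apply lt_0_INR; exact HN0).
  assert (INR N <= INR n) by (apply le_INR; exact Hn).
  apply Rle_lt_trans with (/ INR N); [|exact HN].
  apply Rinv_le_contravar; lra.
Qed.

Lemma cv_of_close (u : nat -> R) (p : R) :
  (forall n, Rabs (u n - p) < / (INR n + 1)) -> Un_cv u p.
Proof.
  intros H eps He. destruct (inv_small eps He) as [N HN].
  exists N. intros n Hn. unfold R_dist.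
  apply Rlt_trans with (/ (INR n + 1)); [apply H| apply HN; lia].
Qed.

Lemma inv_pos n : 0 < / (INR n + 1).
Proof. apply Rinv_0_lt_compat. pose proof (pos_INR n). lra. Qed.

Lemma o_cont_pt (o : R -> R -> R) (Hoc : op_continuous o) (p q c : R) :
  0 <= p -> 0 <= q -> o p q < c ->
  exists d, 0 < d /\ forall u v, 0 <= u -> 0 <= v -> Rabs (u - p) < d -> Rabs (v - q) < d -> o u v < c.
Proof.
  intros Hp Hq Hc. apply NNPP. intro Hn.
  assert (H : forall n : nat, exists uv : R * R, 0 <= fst uv /\ 0 <= snd uv /\
     Rabs (fst uv - p) < / (INR n + 1) /\ Rabs (snd uv - q) < / (INR n + 1) /\ c <= o (fst uv) (snd uv)).
  { intro n. apply NNPP. intro Hn2. apply Hn. exists (/ (INR n + 1)). split; [apply inv_pos|].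
    intros u v Hu Hv H1 H2. apply Rnot_le_lt. intro Hc2. apply Hn2. exists (u, v). simpl. tauto. }
  set (f := fun n => proj1_sig (constructive_indefinite_description _ (H n))).
  assert (Hf : forall n, 0 <= fst (f n) /\ 0 <= snd (f n) /\
     Rabs (fst (f n) - p) < / (INR n + 1) /\ Rabs (snd (f n) - q) < / (INR n + 1) /\ c <= o (fst (f n)) (snd (f n))).
  { intro n. unfold f. exact (proj2_sig (constructive_indefinite_description _ (H n))). }
  assert (Hcv := Hoc (fun n => fst (f n)) (fun n => snd (f n)) p q
     (fun n => proj1 (Hf n)) (fun n => proj1 (proj2 (Hf n))) Hp Hq
     (cv_of_close _ _ (fun n => proj1 (proj2 (proj2 (Hf n)))))
     (cv_of_close _ _ (fun n => proj1 (proj2 (proj2 (proj2 (Hf n))))))).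
  destruct (Hcv (c - o p q)) as [N HN]; [lra|].
  specialize (HN N (Nat.le_refl N)). unfold R_dist in HN.
  destruct (Hf N) as [_ [_ [_ [_ H5]]]].
  apply Rabs_def2 in HN. lra.
Qed.

Section S.
Variables (X : Type) (o : R -> R -> R) (P : X -> X -> R -> R)
  (Ho : is_gp_op o) (HP : is_gp_metric o P).

Lemma P_nonneg a b t : 0 < t -> 0 <= P a b t.
Proof. destruct HP as [H _]. apply H. Qed.

Lemma P_refl a t : 0 < t -> P a a t = 0.
Proof. destruct HP as [_ [H _]]. intros. apply (proj2 (H a a)); auto. Qed.

Lemma P_sym a b t : 0 < t -> P a b t = P b a t.
Proof. destruct HP as [_ [_ [H _]]]. apply H. Qed.

Lemma P_tri a b x s t : 0 < s -> 0 < t -> P a b (s + t) <= o (P a x s) (P b x t).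
Proof. destruct HP as [_ [_ [_ H]]]. apply H. Qed.

Lemma P_mono a b s t : 0 < s -> s <= t -> P a b t <= P a b s.
Proof.
  intros Hs Hst. destruct (Req_dec s t) as [<-|Hne]; [lra|].
  replace t with (s + (t - s)) by ring.
  eapply Rle_trans; [apply (P_tri a b b); lra|].
  rewrite (P_refl b); [|lra].
  destruct Ho as [_ [H0 _]]. rewrite H0; [lra|apply P_nonneg; lra].
Qed.

Lemma sep (B : X -> Prop) (a : X) : gp_closed P B -> ~ B a ->
  exists e, 0 < e /\ forall b, B b -> e <= P a b e.
Proof.
  intros HB Ha. apply NNPP. intro Hn.
  assert (H : forall n : nat, exists b, B b /\ P a b (/ (INR n + 1)) < / (INR n + 1)).
  { intro n. apply NNPP. intro Hn2. apply Hn. exists (/ (INR n + 1)). split; [apply inv_pos|].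
    intros b Hb. apply Rnot_lt_le. intro. apply Hn2. exists b. auto. }
  set (f := fun n => proj1_sig (constructive_indefinite_description _ (H n))).
  assert (Hf : forall n, B (f n) /\ P a (f n) (/ (INR n + 1)) < / (INR n + 1)).
  { intro n. unfold f. exact (proj2_sig (constructive_indefinite_description _ (H n))). }
  apply Ha. apply (HB f a); [intro n; apply Hf|].
  intros t Ht eps He.
  destruct (inv_small (Rmin t eps)) as [N HN]; [apply Rmin_glb_lt; auto|].
  exists N. intros n Hn0. specialize (HN n ltac:(lia)).
  pose proof (Rmin_l t eps). pose proof (Rmin_r t eps).
  pose proof (inv_pos n).
  unfold R_dist. rewrite Rminus_0_r. rewrite P_sym; [|auto].
  assert (K1 : P a (f n) t <= P a (f n) (/ (INR n + 1))) by (apply P_mono; lra).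
  assert (K2 := P_nonneg a (f n) t Ht).
  destruct (Hf n) as [_ K3].
  rewrite Rabs_right; lra.
Qed.

Lemma core a b x ea eb da db :
  0 < ea -> 0 < eb -> ea <= eb -> eb <= P b a eb ->
  (forall u v, 0 <= u -> 0 <= v -> u < da -> v < da -> o u v < ea) ->
  (forall u v, 0 <= u -> 0 <= v -> u < db -> v < db -> o u v < eb) ->
  P a x (ea/2) < da -> P b x (eb/2) < db -> False.
Proof.
  intros Hea Heb Hle Hs Gda Gdb H1 H2.
  assert (T := P_tri a b x (ea/2) (eb/2) ltac:(lra) ltac:(lra)).
  assert (M : P a b eb <= P a b (ea/2 + eb/2)) by (apply P_mono; lra).
  rewrite P_sym in M; [|lra].
  pose proof (P_nonneg a x (ea/2) ltac:(lra)). pose proof (P_nonneg b x (eb/2) ltac:(lra)).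
  destruct (Rle_dec da db).
  - assert (o (P a x (ea/2)) (P b x (eb/2)) < eb) by (apply Gdb; lra). lra.
  - assert (o (P a x (ea/2)) (P b x (eb/2)) < ea) by (apply Gda; lra). lra.
Qed.

Definition Ubig (A B : X -> Prop) (x : X) : Prop :=
  exists a e d, A a /\ 0 < e /\ 0 < d /\ (forall b, B b -> e <= P a b e) /\
    (forall u v, 0 <= u -> 0 <= v -> u < d -> v < d -> o u v < e) /\ P a x (e/2) < d.

Lemma Ubig_open (H5 : P5 P) (Hoc : op_continuous o) A B : tauP_open P (Ubig A B).
Proof.
  intros x [a [e [d [HA [He [Hd [Hs [Hg Hx]]]]]]]].
  assert (Hc := H5 a x (e/2) ltac:(lra)).
  unfold continuity_pt, continue_in, limit1_in, limit_in in Hc. simpl in Hc.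
  destruct (Hc (d - P a x (e/2)) ltac:(lra)) as [del [Hdel Hc2]].
  set (m := Rmin del (e/2)).
  assert (Hm1 : m <= del) by apply Rmin_l. assert (Hm2 : m <= e/2) by apply Rmin_r.
  assert (Hm0 : 0 < m) by (apply Rmin_glb_lt; lra).
  set (s := e/2 - m/2).
  assert (Hps : P a x s < d).
  { assert (K : R_dist (P a x s) (P a x (e/2)) < d - P a x (e/2)).
    { apply Hc2. split. { split; [exact I|]. unfold s. lra. }
      unfold R_dist, s. replace (e/2 - m/2 - e/2) with (-(m/2)) by ring.
      rewrite Rabs_Ropp, Rabs_right; lra. }
    unfold R_dist in K. apply Rabs_def2 in K. lra. }
  assert (Hs0 : 0 < s) by (unfold s; lra).
  destruct (o_cont_pt o Hoc (P a x s) 0 d (P_nonneg a x s Hs0) (Rle_refl 0)) as [al [Hal Hal2]].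
  { destruct Ho as [_ [H0 _]]. rewrite H0; [lra|apply P_nonneg; lra]. }
  exists al, (m/2). split; [lra|]. split; [lra|].
  intros y Hy. unfold open_ball in Hy.
  exists a, e, d. repeat split; auto.
  replace (e/2) with (s + m/2) by (unfold s; ring).
  eapply Rle_lt_trans; [apply (P_tri a y x); lra|].
  rewrite (P_sym y x); [|lra].
  pose proof (P_nonneg x y (m/2) ltac:(lra)).
  apply Hal2.
  - apply P_nonneg; lra.
  - lra.
  - rewrite Rminus_diag, Rabs_R0. lra.
  - rewrite Rminus_0_r, Rabs_right; lra.
Qed.

Lemma Ubig_contains (Hoc : op_continuous o) (A B : X -> Prop) :
  gp_closed P B -> (forall x, A x -> B x -> False) -> forall x, A x -> Ubig A B x.
Proof.
  intros HB Hd x Hx.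
  destruct (sep B x HB (fun h => Hd x Hx h)) as [e [He Hs]].
  destruct (o_cont_pt o Hoc 0 0 e (Rle_refl 0) (Rle_refl 0)) as [d [Hd0 Hg]].
  { destruct Ho as [_ [H0 _]]. rewrite H0; lra. }
  exists x, e, d. repeat split; auto.
  - intros u v Hu Hv H1 H2. apply Hg; auto; rewrite Rminus_0_r, Rabs_right; lra.
  - rewrite P_refl; lra.
Qed.

End S.

Theorem mainTheorem11 (X : Type) (o : R -> R -> R) (P : X -> X -> R -> R)
  (Ho : is_gp_op o) (HP : is_gp_metric o P) (H5 : P5 P) (Hoc : op_continuous o) :
  forall A B : X -> Prop,
    gp_closed P A -> gp_closed P B -> (forall x, A x -> B x -> False) ->
    exists U V : X -> Prop,
      tauP_open P U /\ tauP_open P V /\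
      (forall x, A x -> U x) /\ (forall x, B x -> V x) /\
      (forall x, U x -> V x -> False).
Proof.
  intros A B HA HB Hd.
  exists (Ubig X o P A B), (Ubig X o P B A).
  split; [apply Ubig_open; auto|].
  split; [apply Ubig_open; auto|].
  split; [apply Ubig_contains; auto|].
  split; [apply Ubig_contains; auto; intros x h1 h2; exact (Hd x h2 h1)|].
  intros x [a [ea [da [Ha [Hea [Hda [Hsa [Hga Hxa]]]]]]]]
           [b [eb [db [Hb [Heb [Hdb [Hsb [Hgb Hxb]]]]]]]].
  destruct (Rle_dec ea eb).
  - exact (core X o P Ho HP a b x ea eb da db Hea Heb r (Hsb a Ha) Hga Hgb Hxa Hxb).
  - exact (core X o P Ho HP b a x eb ea db da Heb Hea ltac:(lra) (Hsa b Hb) Hgb Hga Hxb Hxa).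
Qed.
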